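(* Let $G=(V,E)$ be a control flow graph and $p,a,b\in V$ three distinct nodes such that $p$ is a predicate node with successors $s_1$ and $s_2$. Then $a,b$ are DOD on $p$ if and only if (i) $p$ has at least two successors in $A_p$, (ii) there exists an $s_1$-strip in $A_p$ that contains $a$ before $b$, and (iii) there exists an $s_2$-strip in $A_p$ that contains $b$ before $a$.
   Context: A control flow graph (CFG) is a finite directed graph $G=(V,E)$ in which every node has at most two outgoing edges; nodes with exactly two outgoing edges are predicate nodes. A path from $n_1$ is a nonempty finite or infinite sequence of nodes with each adjacent pair an edge; it is maximal if it is infinite or its last node has no successor. $V_p$ is the set of nodes occurring on all maximal paths from $p$ in $G$. For $V'\subseteq V$, a $V'$-interval from $x$ to $y$ is a finite path $n_1\ldots n_k$ in $G$ with $k\ge 2$, $n_1=x\in V'$, $n_k=y\in V'$, and $n_i\notin V'$ for $1<i<k$. $A_p$ is the directed graph with node set $V_p$ and an edge $(x,y)$ iff there is a $V_p$-interval from $x$ to $y$ in $G$. For $i\in\{1,2\}$, $V_i$ is the set of nodes $n\in V_p$ such that there is a finite path in $G$ from $s_i$ to $n$ whose nodes other than the last one all lie outside $V_p$ (possibly $n=s_i$). An $s_i$-strip is a finite path $n\ldots m$ in $A_p$ whose first node lies in $V_i$ and all of whose other nodes lie in $V_p\setminus V_i$, such that the successor of $m$ in $A_p$ is a node in $V_i$. For three distinct nodes $p,a,b$ with $p$ a predicate node with successors $s_1,s_2$, the nodes $a,b$ are DOD on $p$ if all maximal paths from $p$ contain both $a$ and $b$, all maximal paths from $s_1$ contain $a$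 before any occurrence of $b$, and all maximal paths from $s_2$ contain $b$ before any occurrence of $a$. *)

(* Defs.v *)
From mathcomp Require Import all_boot.
Set Implicit Arguments. Unset Strict Implicit. Unset Printing Implicit Defensive.

Section CFGDefs.
Variables (V : finType) (E : rel V).

Definition CFG : Prop := forall x : V, #|[set y | E x y]| <= 2.

Definition predicate_node (x : V) : Prop := #|[set y | E x y]| = 2.

(* A finite maximal path from x is  x :: s  with  path E x s  and a last node
   without successor; an infinite path from x is f : nat -> V with f 0 = x. *)
Definition finite_maxpath (x : V) (s : seq V) : Prop :=
  path E x s /\ (forall y, ~~ E (last x s) y).

Definition infinite_path (x : V) (f : nat -> V) : Prop :=
  f 0 = x /\ (forall i, E (f i) (f i.+1)).

Definition all_maxpaths_contain (x a : V) : Prop :=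
  (forall s, finite_maxpath x s -> a \in x :: s) /\
  (forall f, infinite_path x f -> exists i, f i = a).

Definition all_maxpaths_before (x a b : V) : Prop :=
  (forall s, finite_maxpath x s ->
     a \in x :: s /\ index a (x :: s) < index b (x :: s)) /\
  (forall f, infinite_path x f ->
     exists i, f i = a /\ forall j, j <= i -> f j <> b).

Definition Vp (p n : V) : Prop := all_maxpaths_contain p n.

(* V'-interval from x to y: the path x :: s, with s nonempty, ending in y,
   whose interior nodes (behead (belast x s)) lie outside V' *)
Definition interval (P : V -> Prop) (x y : V) : Prop :=
  P x /\ P y /\
  exists s : seq V, s <> [::] /\ path E x s /\ last x s = y /\
    (forall z, z \in behead (belast x s) -> ~ P z).

Definition Ap (p x y : V) : Prop := interval (Vp p) x y.

Definition Vi (p si n : V) : Prop :=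
  Vp p n /\
  exists s : seq V, path E si s /\ last si s = n /\
    (forall z, z \in belast si s -> ~ Vp p z).

Fixpoint Ap_path (p x : V) (r : seq V) : Prop :=
  match r with
  | [::] => True
  | y :: r' => Ap p x y /\ Ap_path p y r'
  end.

Definition strip (p si n : V) (r : seq V) : Prop :=
  Vi p si n /\ Ap_path p n r /\
  (forall z, z \in r -> Vp p z /\ ~ Vi p si z) /\
  (exists y, Ap p (last n r) y /\ Vi p si y).

(* the sequence t contains a before b (first occurrence of a precedes
   the first occurrence of b, and b occurs) *)
Definition contains_before (t : seq V) (a b : V) : Prop :=
  b \in t /\ index a t < index b t.

Definition DOD (p s1 s2 a b : V) : Prop :=
  all_maxpaths_contain p a /\ all_maxpaths_contain p b /\
  all_maxpaths_before s1 a b /\ all_maxpaths_before s2 b a.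

End CFGDefs.

(* Main.v *)
Require Import Defs.
From mathcomp Require Import all_boot.
From Stdlib Require Import Classical ClassicalEpsilon.
Set Implicit Arguments. Unset Strict Implicit. Unset Printing Implicit Defensive.


Definition dP (P : Prop) : bool := if excluded_middle_informative P then true else false.
Lemma dPP (P : Prop) : reflect P (dP P).
Proof. by rewrite /dP; case: excluded_middle_informative => h; constructor. Qed.

Section S.
Variables (V : finType) (E : rel V).

Inductive W (A B : V -> Prop) : V -> Prop :=
| Win x : A x -> W A B x
| Wstep x : ~ B x -> (exists y, E x y) -> (forall y, E x y -> W A B y) -> W A B x.

Definition Gen (A B : V -> Prop) x :=
 (forall s, finite_maxpath E x s -> exists i, i < size (x::s) /\ A (nth x (x::s) i) /\
      forall j, j <= i -> ~ B (nth x (x::s) j)) /\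
 (forall f, infinite_path E x f -> exists i, A (f i) /\ forall j, j <= i -> ~ B (f j)).

Lemma W_Gen A B x : (forall v, A v -> ~ B v) -> W A B x -> Gen A B x.
Proof.
move=> dis; elim=> {x} [x Ax | x nBx [y0 Exy0] _ IH]; split.
- by move=> s _; exists 0; split=> //; split=> // j; rewrite leqn0 => /eqP ->; apply: dis.
- move=> f [f0 _]; exists 0; rewrite f0; split=> // j; rewrite leqn0 => /eqP ->; rewrite f0; exact: dis.
- move=> [|y s] [/= pth nosucc].
  + by move: (nosucc y0); rewrite Exy0.
  + move/andP: pth => [Exy pth].
    have [i [isz [Ai nB]]] := (IH y Exy).1 s (conj pth nosucc).
    exists i.+1; split=> //; split; first by rewrite /= (set_nth_default y).
    case=> [|j] //= ji; rewrite (set_nth_default y); last by apply: leq_ltn_trans isz.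
    exact: nB.
- move=> f [f0 fE].
  have Ex1 : E x (f 1) by rewrite -f0; apply: fE.
  have [i [Ai nB]] := (IH _ Ex1).2 (fun i => f i.+1) (conj erefl (fun i => fE i.+1)).
  exists i.+1; split=> // [[|j]] ji; first by rewrite f0.
  exact: nB.
Qed.
End S.
Lemma dPT (P : Prop) : dP P -> P.
Proof. by move/dPP. Qed.
Lemma dPI (P : Prop) : P -> dP P.
Proof. by move/dPP. Qed.


Section S.
Variables (V : finType) (E : rel V).
Notation W := (W E).

Lemma path_iota (f : nat -> V) m i : (forall j, m <= j < m + i -> E (f j) (f j.+1)) ->
  path E (f m) (map f (iota m.+1 i)).
Proof.
elim: i m => [|i IH] m h //=.
rewrite (h m); last by rewrite leqnn addnS ltnS leq_addr.
apply: IH => j /andP [mj ji]; apply: h; rewrite ltnW //= addnS ; by rewrite -addSn.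
Qed.

Lemma last_iota (f : nat -> V) m i : last (f m) (map f (iota m.+1 i)) = f (m + i).
Proof. by elim: i m => [|i IH] m /=; rewrite ?addn0 // IH addnS. Qed.

Lemma notW_path A B x : ~ W A B x ->
  (exists s, path E x s /\ (forall v, v \in x :: s -> ~ A v) /\
     (B (last x s) \/ forall y, ~~ E (last x s) y)) \/
  (exists f, infinite_path E x f /\ forall i, ~ A (f i)).
Proof.
move=> nWx.
pose g v := odflt v [pick y | E v y && dP (~ W A B y)].
have key : forall v, ~ W A B v -> ~ B v -> (exists y, E v y) -> E v (g v) /\ ~ W A B (g v).
  move=> v nWv nBv exv; rewrite /g; case: pickP => [y /andP [Evy /dPT nW] | none] //=.
  exfalso; apply: nWv; apply: Wstep => // y Evy; apply: NNPP => nW.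
  by move: (none y); rewrite Evy /=; case: dPP.
pose f i := iter i g x.
have fS i : f i.+1 = g (f i) by [].
case: (classic (exists i, dP (B (f i) \/ forall y, ~~ E (f i) y))) => [ex | nex].
- left.
  have [i /dPP Hi imin] := ex_minnP ex.
  have nB : forall k, k < i -> ~ B (f k) /\ exists y, E (f k) y.
    move=> k ki.
    have nP : ~ dP (B (f k) \/ forall y, ~~ E (f k) y) by move=> H; have := imin k H; rewrite leqNgt ki.
    split; first by move=> Bf; apply: nP; apply: dPI; left.
    apply: NNPP => nn; apply: nP; apply: dPI; right => y.
    by apply/negP => Ey; apply: nn; exists y.
  have pre : forall j, j <= i -> ~ W A B (f j) /\ (j < i -> E (f j) (f j.+1)).
    elim=> [|j IH] ji.
      split=> // ji'.
      have [nB0 ex0] := nB 0 ji'.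
      exact: (key _ nWx nB0 ex0).1.
    have [nWj Ej] := IH (ltnW ji).
    have [nBj exj] := nB j ji.
    have [Ej' nWj'] := key _ nWj nBj exj.
    split; first by rewrite fS.
    move=> ji2; have [nBj1 exj1] := nB _ ji2.
    by rewrite fS; exact: (key _ nWj' nBj1 exj1).1.
  exists (map f (iota 1 i)); split.
    by apply: (path_iota (m:=0)) => j /andP [_ ji]; apply: (pre j (ltnW ji)).2.
  split.
    move=> v; rewrite -[x :: _]/(map f (iota 0 i.+1)) => /mapP [j]; rewrite mem_iota => /andP [_ ji] ->.
    move=> Av; apply: (pre j ji).1; exact: Win.
  by rewrite -[x]/(f 0) last_iota add0n.
- right; exists f.
  have nB : forall k, ~ B (f k) /\ exists y, E (f k) y.
    move=> k; split.
      move=> Bf; apply: nex; exists k; apply: dPI; by left.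
    apply: NNPP => nn; apply: nex; exists k; apply: dPI; right => y.
    by apply/negP => Ey; apply: nn; exists y.
  have nW : forall i, ~ W A B (f i).
    elim=> [|i IH] //; rewrite fS; exact: (key _ IH (nB i).1 (nB i).2).2.
  split; last by move=> i Ai; apply: (nW i); apply: Win.
  split=> // i; rewrite fS; exact: (key _ (nW i) (nB i).1 (nB i).2).1.
Qed.

Lemma W_FF x : ~ W (fun _ => False) (fun _ => False) x.
Proof. by elim=> // y _ [z Ez] _ IH; apply: (IH z). Qed.

Lemma maxpath_exists x : (exists s, finite_maxpath E x s) \/ (exists f, infinite_path E x f).
Proof.
case: (notW_path (@W_FF x)) => [[s [ps [_ [//|ns]]]] | [f [fi _]]]; [left; by exists s; split | right; by exists f].
Qed.

End S.


Section S.
Variables (V : finType) (E : rel V).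
Notation W := (W E).

Lemma nth_last_cons (x : V) s : nth x (x :: s) (size s) = last x s.
Proof. by rewrite -[size s]/((size (x :: s)).-1) nth_last. Qed.

Lemma Gen_W A B x : Gen E A B x -> W A B x.
Proof.
move=> [G1 G2]; apply: NNPP => nW.
case: (notW_path nW) => [[s [ps [nA [Bl | dead]]]] | [f [fi nA]]].
- case: (maxpath_exists E (last x s)) => [[t [pt dt]] | [h [h0 hE]]].
  + have fm : finite_maxpath E x (s ++ t) by split; rewrite ?cat_path ?last_cat ?ps.
    have [i [isz [Ai nB]]] := G1 _ fm.
    case: (leqP i (size s)) => iS.
    * apply: (nA (nth x (x :: s) i)); first by rewrite mem_nth.
      by move: Ai; rewrite -cat_cons nth_cat /= ltnS iS.
    * apply: (nB (size s) (ltnW iS)).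
      by rewrite -cat_cons nth_cat /= ltnSn nth_last_cons.
  + pose f i := if i <= size s then nth x (x :: s) i else h (i - size s).
    have fi : infinite_path E x f.
      split; first by [].
      move=> i; rewrite /f; case: (ltngtP i (size s)) => iS.
      * by move/pathP: ps => /(_ x i iS).
      * rewrite subSn; last by apply: ltnW.
        by apply: hE.
      * by rewrite iS subSn // subnn nth_last_cons -h0; apply: hE.
    have [i [Ai nB]] := G2 _ fi.
    case: (leqP i (size s)) => iS.
    * apply: (nA (nth x (x :: s) i)); first by rewrite mem_nth.
      by move: Ai; rewrite /f iS.
    * apply: (nB (size s) (ltnW iS)).
      by rewrite /f leqnn nth_last_cons.
- have [i [isz [Ai _]]] := G1 _ (conj ps dead).
  by apply: (nA (nth x (x :: s) i)) => //; rewrite mem_nth.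
- by have [i [Ai _]] := G2 _ fi; apply: (nA i).
Qed.

End S.


Section S.
Variables (V : finType) (E : rel V).
Notation W := (W E).

Lemma list_before (x a b : V) (l : seq V) : a != b ->
  (a \in l /\ index a l < index b l) <->
  exists i, i < size l /\ nth x l i = a /\ forall j, j <= i -> nth x l j <> b.
Proof.
move=> ab; split.
- move=> [al ib]; exists (index a l); split; first by rewrite index_mem.
  split; first by rewrite nth_index.
  move=> j ji nb.
  have js : j < size l by apply: leq_ltn_trans ji _; rewrite index_mem.
  have := index_nth x js; rewrite nb => bj.
  by move: (leq_ltn_trans bj (leq_ltn_trans ji ib)); rewrite ltnn.
- move=> [i [isz [ia nb]]]; split; first by rewrite -ia mem_nth.
  have ai : index a l <= i by rewrite -ia index_nth.
  apply: leq_ltn_trans ai _; rewrite ltnNge; apply/negP => bi.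
  have bl : b \in l by rewrite -index_mem (leq_ltn_trans bi isz).
  by apply: (nb _ bi); rewrite nth_index.
Qed.

Lemma Vp_W p n : Vp E p n <-> W (fun v => v = n) (fun _ => False) p.
Proof.
split=> [[h1 h2] | h].
- apply: Gen_W; split.
  + move=> s /h1 ns; exists (index n (p :: s)); split; first by rewrite index_mem.
    split; [exact: nth_index | by move=> ? ? []].
  + by move=> f /h2 [i fi]; exists i; split=> // ? ? [].
- have [g1 g2] := W_Gen (fun v _ (h : False) => h) h; split.
  + by move=> s /g1 [i [isz [ni _]]]; rewrite -ni mem_nth.
  + by move=> f /g2 [i [fi _]]; exists i.
Qed.

Lemma AMB_W x a b : a != b ->
  all_maxpaths_before E x a b <-> W (fun v => v = a) (fun v => v = b) x.
Proof.
move=> ab; split=> [[h1 h2] | h].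
- apply: Gen_W; split.
  + by move=> s /h1 /(list_before x _ ab).
  + move=> f /h2 [i [fi nb]]; exists i; split=> // j ji; exact: nb.
- have dis : forall v, v = a -> ~ v = b by move=> v -> ba; move: ab; rewrite ba eqxx.
  have [g1 g2] := W_Gen dis h; split.
  + by move=> s /g1 hh; apply/(list_before x _ ab).
  + by move=> f /g2 [i [fi nb]]; exists i; split.
Qed.

End S.


Section S.
Variables (V : finType) (E : rel V).
Notation W := (W E).

Lemma W_inv A B x : W A B x -> ~ A x ->
  ~ B x /\ (exists y, E x y) /\ forall y, E x y -> W A B y.
Proof. by case. Qed.

Lemma W_prop A B x s : W A B x -> path E x s ->
  (forall v, v \in belast x s -> ~ A v) -> W A B (last x s).
Proof.
elim: s x => [|y s IH] x Wx //= /andP [Exy ps] nA.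
apply: IH => //; last by move=> v vb; apply: nA; rewrite inE vb orbT.
have [_ [_ h]] := W_inv Wx (nA x (mem_head _ _)); exact: h.
Qed.

Lemma W_reach A B x : W A B x -> exists s, path E x s /\ A (last x s).
Proof.
elim=> {x} [x Ax | x _ [y Exy] _ IH]; first by exists [::].
have [s [ps As]] := IH y Exy; exists (y :: s); by rewrite /= Exy ps.
Qed.

Lemma W_cycle A B x c : W A B x -> ~ A x -> path E x c -> c != [::] -> last x c = x ->
  (forall v, v \in c -> ~ A v) -> False.
Proof.
move=> Wx; elim: Wx c => {x} [x Ax | x _ _ _ IH] c nAx; first by [].
case: c => [|y c] //= /andP [Exy pc] _ lc nA.
apply: (IH y Exy (rcons c y)); first by apply: nA; rewrite mem_head.
- by rewrite rcons_path pc lc.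
- by case: c {pc lc nA}.
- by rewrite last_rcons.
- move=> v; rewrite mem_rcons inE => /orP [/eqP -> | vc]; apply: nA; rewrite ?mem_head //.
  by rewrite inE vc orbT.
Qed.

Lemma W_mono A B A' B' x : (forall v, A v -> A' v) -> (forall v, B' v -> B v) ->
  W A B x -> W A' B' x.
Proof.
move=> hA hB; elim=> {x} [x Ax | x nB ex _ IH]; first by apply: Win; apply: hA.
by apply: Wstep => // Bx; apply: nB; apply: hB.
Qed.

Lemma W_comp A A' B x : W A B x -> (forall v, A v -> W A' B v) -> W A' B x.
Proof.
move=> Wx h; elim: Wx => {x} [x Ax | x nB ex _ IH]; first by apply: h.
by apply: Wstep.
Qed.

Lemma W_noBad A B x : W A (fun _ => False) x ->
  (forall s, path E x s -> B (last x s) -> exists v, v \in x :: s /\ A v) -> W A B x.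
Proof.
elim=> {x} [x Ax | x _ ex _ IH] h; first by apply: Win.
case: (classic (A x)) => [Ax | nAx]; first by apply: Win.
apply: Wstep => //.
- by move=> Bx; have [v [] ] := h [::] erefl Bx; rewrite inE => /eqP ->.
- move=> y Exy; apply: IH => // s ps Bl.
  have [v [vin Av]] : exists v, v \in x :: y :: s /\ A v by apply: h; rewrite /= ?Exy ?ps.
  exists v; split=> //; move: vin; rewrite inE => /orP [/eqP vx | //].
  by move: Av; rewrite vx => /nAx.
Qed.

Lemma W_two a b x : a <> b -> W (fun v => v = a) (fun v => v = b) x ->
  W (fun v => v = b) (fun v => v = a) x -> False.
Proof.
move=> ab W1; elim: W1 => {x} [x -> | x nb [y Exy] _ IH] W2.
- by have [na _] := W_inv W2 ab; apply: na.
- have [_ [_ h]] := W_inv W2 nb; exact: (IH y Exy (h y Exy)).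
Qed.

Lemma last_split (P : pred V) c : has P c ->
  exists c1 v c2, c = c1 ++ v :: c2 /\ P v /\ ~~ has P c2.
Proof.
elim: c => [|x c IH] //= /orP [Px | hc].
- case hc: (has P c); last by exists [::], x, c; rewrite hc.
  have [c1 [v [c2 [-> [Pv nh]]]]] := IH hc; by exists (x :: c1), v, c2.
- have [c1 [v [c2 [-> [Pv nh]]]]] := IH hc; by exists (x :: c1), v, c2.
Qed.

Lemma first_split (P : pred V) c : has P c ->
  exists c1 v c2, c = c1 ++ v :: c2 /\ P v /\ ~~ has P c1.
Proof.
elim: c => [|x c IH] //= ; case Px: (P x) => /= hc.
- by exists [::], x, c.
- have [c1 [v [c2 [-> [Pv nh]]]]] := IH hc; exists (x :: c1), v, c2; by rewrite /= Px.
Qed.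

Lemma mem_interval (x v : V) s : v \in s -> v = last x s \/ v \in behead (belast x s).
Proof.
case: s => [|y s] //= vin.
move: vin; rewrite lastI mem_rcons inE => /orP [/eqP -> | vb]; [by left | by right].
Qed.

Lemma mem_belast_cons (x v : V) s : v \in belast x s -> v = x \/ v \in behead (belast x s).
Proof. case: s => [|y s] //=; rewrite inE => /orP [/eqP ->| h]; [by left | by right]. Qed.

Lemma last_in (x : V) l : last x l != x -> last x l \in l.
Proof. by case: l => [|y l] /=; [rewrite eqxx | rewrite -/(last y l) => _; rewrite mem_last]. Qed.

End S.


Section S.
Variables (V : finType) (E : rel V) (p : V).
Notation W := (W E).
Notation N := (Vp E p).
Definition Nb v := dP (Vp E p v).

Lemma NbE v : Nb v = true <-> N v.
Proof. by split; [move/dPT | move/dPI]. Qed.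

Lemma N_p : N p.
Proof. by apply/Vp_W; apply: Win. Qed.

Lemma Ap_N x y : Ap E p x y -> N x /\ N y.
Proof. by case=> [hx [hy _]]. Qed.

Lemma Ap_path_cat x l1 l2 : Ap_path E p x (l1 ++ l2) <->
  Ap_path E p x l1 /\ Ap_path E p (last x l1) l2.
Proof.
elim: l1 x => [|y l1 IH] x /=; first by split=> // [[]].
by rewrite IH; split=> [[h [h1 h2]] | [[h h1] h2]].
Qed.

Lemma Ap_path_N x l : N x -> Ap_path E p x l -> forall z, z \in x :: l -> N z.
Proof.
elim: l x => [|y l IH] x Nx /=.
- by move=> _ z; rewrite inE => /eqP ->.
- move=> [Axy ap] z; rewrite inE => /orP [/eqP -> //| zin].
  exact: (IH y (Ap_N Axy).2 ap).
Qed.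

Lemma Ap_path_real x l : Ap_path E p x l -> exists s, path E x s /\ (forall v, v \in l -> v \in s).
Proof.
elim: l x => [|y l IH] x /=; first by move=> _; exists [::].
move=> [[_ [_ [s [sn [ps [ls _]]]]]] ap].
have [t [pt tin]] := IH y ap.
exists (s ++ t); split; first by rewrite cat_path ps ls pt.
move=> v; rewrite inE mem_cat => /orP [/eqP -> | vl]; last by rewrite tin ?orbT.
rewrite -ls; case: s sn {ps ls} => [//|z s] _ /=; by rewrite mem_last.
Qed.

Lemma W_Ap A B x y : W A B x -> ~ A x -> (forall v, A v -> N v) -> Ap E p x y -> W A B y.
Proof.
move=> Wx nAx hAN [_ [_ [s [sn [ps [ls int]]]]]]; rewrite -ls; apply: W_prop => //.
move=> v /mem_belast_cons [-> // | vi] Av; apply: (int v vi); exact: hAN.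
Qed.

Lemma nil_notN : forall z : V, z \in [::] -> ~ N z.
Proof. by []. Qed.

Lemma proj_gen s : forall x0 pi, N x0 -> path E x0 pi -> (forall z, z \in pi -> ~ N z) ->
  path E (last x0 pi) s -> N (last (last x0 pi) s) ->
  Ap_path E p x0 (filter Nb s) /\ last x0 (filter Nb s) = last (last x0 pi) s.
Proof.
elim: s => [|y s IH] x0 pi Nx0 ppi npi /=.
- move=> _ Nl; split=> //; case: pi {ppi} npi Nl => [//|z pi] npi /= Nl.
  by exfalso; apply: (npi (last z pi)); rewrite ?mem_last.
- move=> /andP [Ey ps] Nl; case Ny: (Nb y) => /=.
  + have Ny' : N y by apply/NbE.
    have [h1 h2] := IH y [::] Ny' erefl nil_notN ps Nl.
    split=> //; split=> //; split=> //.
    split=> //; exists (rcons pi y); split; first by case: pi {ppi npi Ey}.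
    split; first by rewrite rcons_path ppi Ey.
    by split; [rewrite last_rcons | rewrite belast_rcons].
  + have := IH x0 (rcons pi y) Nx0; rewrite last_rcons; apply=> //.
    * by rewrite rcons_path ppi Ey.
    * move=> z; rewrite mem_rcons inE => /orP [/eqP -> | /npi //].
      by move/NbE; rewrite Ny.
Qed.

Lemma proj x s : N x -> path E x s -> N (last x s) ->
  Ap_path E p x (filter Nb s) /\ last x (filter Nb s) = last x s.
Proof. move=> Nx ps Nl; exact: (proj_gen (pi:=[::]) Nx erefl nil_notN ps Nl). Qed.

Lemma proj2 x s : path E x s -> N (last x s) ->
  exists y l, filter Nb (x :: s) = y :: l /\ Vi E p x y /\ Ap_path E p y l /\ last y l = last x s.
Proof.
elim: s x => [|z s IH] x /=.
- move=> _ Nx; exists x, [::]; have -> : Nb x by apply/NbE.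
  by split=> //; split=> //; split=> //; exists [::].
- move=> /andP [Exz ps] Nl; case Nx: (Nb x).
  + have Nx' : N x by apply/NbE.
    have [h1 h2] : Ap_path E p x (filter Nb (z::s)) /\ last x (filter Nb (z::s)) = last x (z::s) by apply: proj => //=; rewrite Exz.
    exists x, (filter Nb (z :: s)); split=> //; split; first by split=> //; exists [::].
    by split.
  + have [y [l [fe [[Ny [t [pt [lt nt]]]] [ap ll]]]]] := IH z ps Nl.
    exists y, l; split; first by rewrite -fe /= ?Nx.
    split; last by split.
    split=> //; exists (z :: t); split; first by rewrite /= Exz pt.
    split=> //= v; rewrite inE => /orP [/eqP -> | /nt //].
    by move/NbE; rewrite Nx.
Qed.

Lemma Vi_Ap si y : E p si -> Vi E p si y -> Ap E p p y.
Proof.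
move=> Epsi [Ny [s [ps [ls ns]]]]; split; first exact: N_p.
split=> //; exists (si :: s); split=> //; split; first by rewrite /= Epsi ps.
by split.
Qed.

Lemma W_Vi A B si y : W A B si -> (forall v, A v -> N v) -> Vi E p si y -> W A B y.
Proof.
move=> Ws hAN [_ [s [ps [ls ns]]]]; rewrite -ls; apply: W_prop => // v /ns nv Av; apply: nv; exact: hAN.
Qed.

End S.


Section S.
Variables (V : finType) (E : rel V) (p : V).
Notation W := (W E).
Notation N := (Vp E p).
Notation WN z := (W (fun v => v = z) (fun _ => False)).

Lemma Ap_real x y : Ap E p x y -> exists s, s != [::] /\ path E x s /\ last x s = y /\
  forall v, v \in s -> v = y \/ ~ N v.
Proof.
move=> [_ [_ [s [sn [ps [ls int]]]]]]; exists s; split; first by case: s sn {ps ls int}.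
split=> //; split=> // v /(mem_interval x) [-> | /int]; [by left | by right].
Qed.

Variables (t1 t2 : V) (t12 : t1 <> t2) (At1 : Ap E p p t1) (At2 : Ap E p p t2).

Lemma tN : N t1 /\ N t2.
Proof. by split; [exact: (Ap_N At1).2 | exact: (Ap_N At2).2]. Qed.

Lemma cyc_N x z c : WN z x -> x <> z -> path E x c -> c != [::] -> last x c = x ->
  (forall v, v \in c -> v <> z) -> False.
Proof. move=> Wz xz pc cn lc nz; apply: (W_cycle Wz xz pc cn lc) => v /nz; exact. Qed.

Lemma notin_Ap (y z : V) (s : seq V) : N z -> y <> z -> (forall v, v \in s -> v = y \/ ~ N v) -> forall v, v \in s -> v <> z.
Proof. by move=> Nz yz h v /h [-> // | nv] vz; apply: nv; rewrite vz. Qed.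

Lemma t_notp : t1 <> p /\ t2 <> p.
Proof.
have [N1 N2] := tN.
suff gen : forall u w, u <> w -> Ap E p p u -> N w -> u <> p.
  by split; [apply: (gen t1 t2) | apply: (gen t2 t1) => // h; apply: t12].
move=> u w uw Au Nw up; have [c [cn [pc [lc hc]]]] := Ap_real Au.
rewrite up in lc hc.
have pw : p <> w by rewrite -up.
apply: (cyc_N (proj1 (Vp_W E p w) Nw) pw pc cn lc).
exact: (notin_Ap Nw pw hc).
Qed.

Lemma nocycle c : path E p c -> c != [::] -> last p c = p -> False.
Proof.
move=> pc cn lc.
have [N1 N2] := tN; have [t1p t2p] := t_notp.
have W1 := proj1 (Vp_W E p t1) N1; have W2 := proj1 (Vp_W E p t2) N2.
have ht1 : t1 \in c.
  apply: NNPP => nin; apply: (cyc_N W1 (fun h => t1p (esym h)) pc cn lc).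
  by move=> v vc vt; apply: nin; rewrite -vt.
have hP : has (fun v => (v == t1) || (v == t2)) c by apply/hasP; exists t1; rewrite ?eqxx.
have [c1 [v [c2 [ce [Pv nh]]]]] := last_split hP.
suff gen : forall tj tk, tj <> tk -> Ap E p p tj -> N tk -> tk <> p -> v = tj -> tk \notin c2 -> False.
  case/orP: Pv => /eqP vt.
  - apply: (gen t1 t2) => //; apply/negP => h; move/hasP: nh; apply; exists t2 => //; by rewrite eqxx orbT.
  - apply: (gen t2 t1) => //; first by move=> h; apply: t12.
    by apply/negP => h; move/hasP: nh; apply; exists t1 => //; rewrite eqxx.
move=> tj tk jk Aj Nk kp vj nk.
have [s [sn [ps [ls hs]]]] := Ap_real Aj.
have Wk := proj1 (Vp_W E p tk) Nk.
have pc2 : path E v c2 by move: pc; rewrite ce cat_path => /andP [_] /=; case/andP.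
apply: (cyc_N Wk (fun h => kp (esym h)) (c := s ++ c2)).
- by rewrite cat_path ps ls -vj pc2.
- by case: s sn {ps ls hs}.
- by rewrite last_cat ls -vj -lc ce last_cat.
- move=> w; rewrite mem_cat => /orP [ws | wc2].
  + exact: (notin_Ap Nk jk hs).
  + by move=> wk; move: nk; rewrite -wk wc2.
Qed.

Lemma C3 x z : N x -> N z -> z <> p -> WN z x.
Proof.
move=> Nx Nz zp; apply: NNPP => nW.
have [N1 N2] := tN; have [t1p t2p] := t_notp.
have Wt : forall tj, Ap E p p tj -> WN z tj.
  move=> tj Aj; apply: (W_Ap (proj1 (Vp_W E p z) Nz) _ _ Aj).
  - by move=> h; apply: zp.
  - by move=> v ->.
have nW3 : ~ W (fun v => v = z \/ v = t1 \/ v = t2) (fun _ => False) x.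
  move=> h; apply: nW; apply: (W_comp h) => v [-> | [-> | ->]].
  - exact: Win.
  - exact: Wt.
  - exact: Wt.
have notWk : forall tk, tk = t1 \/ tk = t2 -> ~ WN tk x.
  move=> tk htk h; apply: nW3; apply: W_mono h => // v ->; by right.
have [r [pr lr]] := W_reach (proj1 (Vp_W E p x) Nx).
have inr : forall tk, tk = t1 \/ tk = t2 -> tk <> p -> N tk -> tk \in r.
  move=> tk htk kp Nk; apply: NNPP => nin; apply: (notWk tk htk); rewrite -lr.
  apply: (W_prop (proj1 (Vp_W E p tk) Nk) pr) => v /mem_belast; rewrite inE => /orP [/eqP -> | vr].
  - by move=> h; apply: kp.
  - by move=> vk; apply: nin; rewrite -vk.
have ht1 : t1 \in r by apply: inr => //; left.
have hP : has (fun v => (v == t1) || (v == t2)) r by apply/hasP; exists t1; rewrite ?eqxx.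
have [c1 [v [c2 [ce [Pv nh]]]]] := last_split hP.
suff gen : forall tj tk, tj <> tk -> Ap E p p tj -> N tk -> tk <> p -> (tk = t1 \/ tk = t2) ->
    v = tj -> tk \notin c2 -> False.
  case/orP: Pv => /eqP vt.
  - apply: (gen t1 t2) => //; [by right | ].
    apply/negP => h; move/hasP: nh; apply; exists t2 => //; by rewrite eqxx orbT.
  - apply: (gen t2 t1) => //; [by move=> h; apply: t12 | by left | ].
    by apply/negP => h; move/hasP: nh; apply; exists t1 => //; rewrite eqxx.
move=> tj tk jk Aj Nk kp htk vj nk.
have [s [sn [ps [ls hs]]]] := Ap_real Aj.
have pc2 : path E v c2 by move: pr; rewrite ce cat_path => /andP [_] /=; case/andP.
apply: (notWk tk htk).
have -> : x = last p (s ++ c2) by rewrite last_cat ls -vj -lr ce last_cat.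
apply: (W_prop (proj1 (Vp_W E p tk) Nk)); first by rewrite cat_path ps ls -vj pc2.
move=> w /mem_belast; rewrite inE mem_cat => /orP [/eqP -> | /orP [ws | wc2]].
- by move=> h; apply: kp.
- exact: (notin_Ap Nk jk hs).
- by move=> wk; move: nk; rewrite -wk wc2.
Qed.

Lemma Kinj x x' u : N x -> N x' -> x <> p -> x' <> p -> Ap E p x u -> Ap E p x' u -> x = x'.
Proof.
move=> Nx Nx' xp x'p Ax Ax'; apply: NNPP => xx'.
have Nu := (Ap_N Ax).2.
suff gen : forall w w', w <> w' -> N w -> N w' -> w' <> p -> Ap E p w u -> u = w -> False.
  case: (classic (u = x)) => [ux | nux]; first exact: (gen x x').
  case: (classic (u = x')) => [ux' | nux']; first by apply: (gen x' x) => // h; apply: xx'.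
  have [d [pd ld]] := W_reach (C3 Nu Nx xp).
  have xd : x \in d by rewrite -ld last_in // ld; apply/eqP => h; apply: nux.
  have hP : has (fun v => (v == x) || (v == x')) d by apply/hasP; exists x; rewrite ?eqxx.
  have [c1 [v [c2 [ce [Pv nh]]]]] := first_split hP.
  suff gen2 : forall w w', w <> w' -> N w' -> w' <> p -> Ap E p w u -> u <> w' -> v = w ->
      w' \notin c1 -> False.
    case/orP: Pv => /eqP vt.
    - apply: (gen2 x x') => //; apply/negP => h; move/hasP: nh; apply; exists x' => //; by rewrite eqxx orbT.
    - apply: (gen2 x' x) => //; [by move=> h; apply: xx' | ].
      by apply/negP => h; move/hasP: nh; apply; exists x => //; rewrite eqxx.
  move=> w w' ww' Nw' w'p Aw uw' vw nc1.
  have [s [sn [ps [ls hs]]]] := Ap_real Aw.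
  have Ev : E (last u c1) v by move: pd; rewrite ce cat_path => /andP [_] /=; case/andP.
  have pc1 : path E u c1 by move: pd; rewrite ce cat_path => /andP [].
  apply: (cyc_N (C3 Nu Nw' w'p) uw' (c := c1 ++ v :: s)).
  - by rewrite cat_path pc1 /= Ev vw ps.
  - by case: (c1) => [|? ?].
  - by rewrite last_cat /= vw ls.
  - move=> z; rewrite mem_cat inE => /orP [zc1 | /orP [/eqP -> | zs]].
    + by move=> zw; move: nc1; rewrite -zw zc1.
    + by rewrite vw.
    + exact: (notin_Ap Nw' uw' hs).
move=> w w' ww' Nw Nw' w'p Aw uw.
have [c [cn [pc [lc hc]]]] := Ap_real Aw.
rewrite uw in lc hc.
apply: (cyc_N (C3 Nw Nw' w'p) ww' pc cn lc).
exact: (notin_Ap Nw' ww' hc).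
Qed.

Lemma reach_notp s l : E p s -> path E s l -> forall v, v \in s :: l -> v <> p.
Proof.
move=> Eps pl v vin vp.
have hP : has (fun w => w == p) (s :: l) by apply/hasP; exists v => //; apply/eqP.
have [c1 [w [c2 [ce [/eqP wp nh]]]]] := first_split hP.
have pp : path E p (s :: l) by rewrite /= Eps pl.
move: pp; rewrite ce cat_path => /andP [pc1 /= /andP [Ew _]].
apply: (nocycle (c := rcons c1 p)).
- by rewrite rcons_path pc1 /=; rewrite wp in Ew.
- by case: c1 {ce nh pc1 Ew}.
- by rewrite last_rcons.
Qed.

End S.


Section S.
Variables (V : finType) (E : rel V) (p : V).
Notation W := (W E).
Notation N := (Vp E p).
Notation WN z := (W (fun v => v = z) (fun _ => False)).
Notation Wab a b := (W (fun v => v = a) (fun v => v = b)).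

Lemma notWb a b : a <> b -> Wab a b b -> False.
Proof. by move=> ab Wb; have [nb _] := W_inv Wb (fun h => ab (esym h)); apply: nb. Qed.

Lemma cb a b n r : a <> b -> N a -> Wab a b n -> Ap_path E p n r -> b \in n :: r ->
  contains_before (n :: r) a b.
Proof.
move=> ab Na; elim: r n => [|y r IH] n Wn ap bin.
- by move: bin; rewrite inE => /eqP bn; exfalso; subst n; exact: (notWb ab Wn).
- case: (classic (n = a)) => [na | nna].
  + split=> //; rewrite na /= eqxx; case: eqP => // ab'; by exfalso; apply: ab; rewrite ab'.
  + have [nb [_ _]] := W_inv Wn nna.
    move: ap => [Any ap].
    have Wy : Wab a b y by apply: (W_Ap Wn nna _ Any) => v ->.
    have biny : b \in y :: r by move: bin; rewrite inE => /orP [/eqP h | //]; exfalso; apply: nb.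
    have [_ ilt] := IH y Wy ap biny.
    split=> //.
    have -> : index a (n :: y :: r) = (index a (y :: r)).+1.
      by rewrite /= ; case: eqP => // h; exfalso; apply: nna.
    have -> : index b (n :: y :: r) = (index b (y :: r)).+1.
      by rewrite /= ; case: eqP => // h; exfalso; apply: nb.
    by [].
Qed.

Lemma decomp (T : V -> Prop) b : forall L y, T y -> T (last y L) -> b \in L -> ~ T b ->
  exists L1 n r y' L3, y :: L = L1 ++ n :: r ++ y' :: L3 /\ T n /\
    (forall z, z \in r -> ~ T z) /\ b \in n :: r /\ T y'.
Proof.
move=> L; have [k] := ubnP (size L); elim: k L => [|k IH] L // szL y Ty Tl bL nTb.
have hP : has (fun v => dP (T v)) L.
  apply/hasP; exists (last y L); last by apply: dPI.
  by case: L {szL Tl} bL => [//|z L] _ /=; rewrite mem_last.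
have [r [y' [L3 [Le [/dPT Ty' nh]]]]] := first_split hP.
have nTr : forall z, z \in r -> ~ T z.
  by move=> z zr Tz; move/hasP: nh; apply; exists z => //; apply: dPI.
case: (boolP (b \in y :: r)) => [byr | nbyr].
- exists [::], y, r, y', L3; by rewrite Le.
- have bL3 : b \in L3.
    move: bL; rewrite Le mem_cat inE => /orP [br | /orP [/eqP by' | //]].
    + by move: nbyr; rewrite inE br orbT.
    + by exfalso; apply: nTb; rewrite by'.
  have sz : size L3 < k by move: szL; rewrite Le size_cat /= addnS ltnS => h; apply: leq_ltn_trans h; rewrite leq_addl.
  have Tl3 : T (last y' L3) by move: Tl; rewrite Le last_cat.
  have [L1 [n [r' [y'' [L3' [e [Tn [nT [bin Ty'']]]]]]]]] := IH L3 sz y' Ty' Tl3 bL3 nTb.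
  exists (y :: r ++ L1), n, r', y'', L3'; split; last by [].
  by rewrite Le -cat_cons e catA.
Qed.

Lemma Ap_path_infix x l L1 n rest : Ap_path E p x l -> x :: l = L1 ++ n :: rest -> Ap_path E p n rest.
Proof.
case: L1 => [|z L1] /=; first by move=> ap [xn le]; rewrite -xn -le.
move=> ap [_ le]; move: ap; rewrite le Ap_path_cat => [[_ /= [_ h]]]; exact: h.
Qed.

Variables (t1 t2 : V) (t12 : t1 <> t2) (At1 : Ap E p p t1) (At2 : Ap E p p t2).

Lemma back (T : V -> Prop) x l x' l' : T x -> T x' -> (forall z, z \in l -> ~ T z) ->
  N x -> N x' -> Ap_path E p x l -> Ap_path E p x' l' -> last x l = last x' l' ->
  (forall z, z \in x :: l -> z <> p) -> (forall z, z \in x' :: l' -> z <> p) ->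
  exists pre, x' :: l' = pre ++ x :: l.
Proof.
move=> Tx Tx' + Nx Nx'.
elim/last_ind: l l' => [|m e IH] l' nT ap ap' ll np np'.
- by exists (belast x' l'); rewrite lastI -ll cats1.
- case/lastP: l' ap' ll np' => [|m' e'] ap' ll np'.
  + exfalso; apply: (nT e); first by rewrite mem_rcons mem_head.
    by move: ll; rewrite last_rcons /= => ->.
  + move: ll; rewrite !last_rcons => ee'.
    move: ap; rewrite -cats1 Ap_path_cat => [[apm /= [Ae _]]].
    move: ap'; rewrite -cats1 Ap_path_cat => [[apm' /= [Ae' _]]].
    rewrite -ee' in Ae'.
    have sub : forall (u : V) k q z, z \in u :: k -> z \in u :: rcons k q.
      by move=> u k q z; rewrite !inE mem_rcons inE => /orP [-> // | ->]; rewrite !orbT.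
    have subm : forall z, z \in m -> z \in rcons m e by move=> z zm; rewrite mem_rcons inE zm orbT.
    have lm : last x m \in x :: m by rewrite mem_last.
    have lm' : last x' m' \in x' :: m' by rewrite mem_last.
    have eql : last x m = last x' m'.
      apply: (Kinj t12 At1 At2 _ _ _ _ Ae Ae').
      - exact: (Ap_path_N Nx apm).
      - exact: (Ap_path_N Nx' apm').
      - by apply: np; apply: sub.
      - by apply: np'; apply: sub.
    have [pre e1] := IH m' (fun z zm => nT z (subm z zm)) apm apm' eql
      (fun z zm => np z (sub _ _ _ _ zm)) (fun z zm => np' z (sub _ _ _ _ zm)).
    exists pre; by rewrite -ee' -cat_cons e1 -catA.
Qed.

End S.


Section S.
Variables (V : finType) (E : rel V) (p : V).
Notation W := (W E).
Notation N := (Vp E p).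
Notation WN z := (W (fun v => v = z) (fun _ => False)).
Notation Wab a b := (W (fun v => v = a) (fun v => v = b)).

Variables (t1 t2 : V) (t12 : t1 <> t2) (At1 : Ap E p p t1) (At2 : Ap E p p t2).

Lemma dir_forward s1 a b : E p s1 -> a <> b -> N a -> N b -> b <> p -> Wab a b s1 ->
  exists n r, strip E p s1 n r /\ contains_before (n :: r) a b.
Proof.
move=> Eps1 ab Na Nbb bp Ws1.
have hAN : forall v, v = a -> N v by move=> v ->.
have [d [pd ld]] := W_reach Ws1.
have [y [l [_ [Viy _]]]] := proj2 pd (eq_ind_r N Na ld).
have WT : forall n, Vi E p s1 n -> Wab a b n by move=> n Vin; exact: (W_Vi Ws1 hAN Vin).
have Wy := WT y Viy.
have Ny := Viy.1.
have yp : y <> p.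
  case: Viy => [_ [sy [psy [lsy _]]]]; apply: (reach_notp t12 At1 At2 Eps1 psy); by rewrite -lsy mem_last.
have yb : y <> b by move=> yb; move: Wy; rewrite yb; exact: notWb.
have [d1 [pd1 ld1]] := W_reach (C3 t12 At1 At2 Ny Nbb bp).
have [d2 [pd2 ld2]] := W_reach (C3 t12 At1 At2 Nbb Ny yp).
have [ap1 lf1] := proj Ny pd1 (eq_ind_r N Nbb ld1).
have [ap2 lf2] := proj Nbb pd2 (eq_ind_r N Ny ld2).
rewrite ld1 in lf1; rewrite ld2 in lf2.
set L := filter (Nb E p) d1 ++ filter (Nb E p) d2.
have apL : Ap_path E p y L by apply/Ap_path_cat; rewrite lf1.
have bL : b \in L by rewrite mem_cat -lf1 last_in // lf1; apply/eqP => h; apply: yb.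
have lL : last y L = y by rewrite last_cat lf1 lf2.
have nTb : ~ Vi E p s1 b by move=> Vb; apply: (notWb ab); exact: WT.
have [L1 [n [r [y' [L3 [Le [Tn [nT [bin Ty']]]]]]]]] := decomp Viy (eq_ind_r (Vi E p s1) Viy lL) bL nTb.
have aprest := Ap_path_infix apL Le.
move/Ap_path_cat: aprest => [apr /= [Ay' _]].
exists n, r; split; last by apply: (cb ab Na (WT n Tn) apr bin).
split=> //; split=> //; split; last by exists y'.
move=> z zr; split; last exact: nT.
by apply: (Ap_path_N Tn.1 apr); rewrite inE zr orbT.
Qed.

Lemma dir_backward s1 a b n r : E p s1 -> a <> b -> a <> p -> strip E p s1 n r ->
  contains_before (n :: r) a b -> N a /\ N b /\ Wab a b s1.
Proof.
move=> Eps1 ab ap [Tn [apr [hr _]]] [bin ilt].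
have Nall : forall z, z \in n :: r -> N z.
  by move=> z; rewrite inE => /orP [/eqP -> | /hr []]; [exact: Tn.1 | ].
have ain : a \in n :: r by rewrite -index_mem (leq_trans ilt) // index_size.
have Na := Nall a ain; have Nbb := Nall b bin.
split=> //; split=> //.
have WaF : WN a s1.
  have [_ [_ h]] := W_inv (proj1 (Vp_W E p a) Na) (fun h => ap (esym h)); exact: h.
apply: (W_noBad WaF) => d pd ld.
apply: NNPP => nex.
have [y [l [fe [Viy [apl ll]]]]] := proj2 pd (eq_ind_r N Nbb ld).
have hP : has (fun v => v == b) (n :: r) by apply/hasP; exists b.
have [c1 [v [c2 [ce [/eqP vb nh]]]]] := first_split hP.
have bc1 : b \notin c1 by apply/negP => h; move/hasP: nh; apply; exists b.
have ac1 : a \in c1.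
  apply: NNPP => /negP nac1; move: ilt; rewrite ce !index_cat (negbTE nac1) (negbTE bc1) vb /= eqxx addn0.
  by rewrite ltnNge leq_addr.
case: c1 ce nh bc1 ac1 => [//|n' c1'] /= [nn' re] _ _ ac1.
rewrite -nn' in ac1.
have aprr : Ap_path E p n (rcons c1' b).
  move: apr; rewrite re vb Ap_path_cat => [[h1 /= [h2 _]]].
  by rewrite -cats1; apply/Ap_path_cat.
have [sn [psn [lsn _]]] := Viy.2.
have [_ [tn [ptn [ltn _]]]] := Tn.
have [t [pt tin]] := Ap_path_real apr.
have pst : path E s1 (tn ++ t) by rewrite cat_path ptn ltn pt.
have np1 : forall z, z \in n :: rcons c1' b -> z <> p.
  move=> z zin; apply: (reach_notp t12 At1 At2 Eps1 pst).
  move: zin; rewrite inE => /orP [/eqP -> | zin].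
  - by rewrite -ltn -cat_cons mem_cat mem_last.
  - have zr : z \in r by rewrite re vb mem_cat inE; move: zin; rewrite mem_rcons inE => /orP [-> | ->]; rewrite ?orbT.
    by rewrite inE mem_cat tin ?orbT.
have np2 : forall z, z \in y :: l -> z <> p.
  move=> z zin; apply: (reach_notp t12 At1 At2 Eps1 pd); by move: zin; rewrite -fe mem_filter => /andP [].
have nT : forall z, z \in rcons c1' b -> ~ Vi E p s1 z.
  move=> z zin; have zr : z \in r by rewrite re vb mem_cat inE; move: zin; rewrite mem_rcons inE => /orP [-> | ->]; rewrite ?orbT.
  exact: (hr z zr).2.
have lleq : last n (rcons c1' b) = last y l by rewrite last_rcons ll ld.
have [pre e] := back t12 At1 At2 Tn Viy nT (Nall n (mem_head _ _)) Viy.1 aprr apl lleq np1 np2.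
apply: nex; exists a; split=> //.
have : a \in y :: l by rewrite e mem_cat; apply/orP; right; move: ac1; rewrite !inE mem_rcons inE => /orP [-> | ->]; rewrite ?orbT.
by rewrite -fe mem_filter => /andP [].
Qed.

End S.

Unset Implicit Arguments.

Theorem theorem4p13 (V : finType) (E : rel V) (p s1 s2 a b : V) :
  CFG E -> predicate_node E p -> E p s1 -> E p s2 -> s1 != s2 ->
  p != a -> p != b -> a != b ->
  (DOD E p s1 s2 a b <->
   [/\ (exists y1 y2, y1 <> y2 /\ Ap E p p y1 /\ Ap E p p y2),
       (exists n r, strip E p s1 n r /\ contains_before (n :: r) a b) &
       (exists n r, strip E p s2 n r /\ contains_before (n :: r) b a)]).
Proof.
move=> _ _ Eps1 Eps2 _ pa pb ab.
have ab' : a <> b by apply/eqP.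
have ba : b != a by rewrite eq_sym.
have ba' : b <> a by apply/eqP.
have ap : a <> p by move=> h; move: pa; rewrite h eqxx.
have bp : b <> p by move=> h; move: pb; rewrite h eqxx.
split.
- move=> [Na [Nb [AB1 AB2]]].
  have W1 := proj1 (AMB_W E s1 ab) AB1.
  have W2 := proj1 (AMB_W E s2 ba) AB2.
  have [d1 [pd1 ld1]] := W_reach W1.
  have [d2 [pd2 ld2]] := W_reach W2.
  have [y1 [l1 [_ [Vy1 _]]]] := proj2 pd1 (eq_ind_r (Vp E p) Na ld1).
  have [y2 [l2 [_ [Vy2 _]]]] := proj2 pd2 (eq_ind_r (Vp E p) Nb ld2).
  have Wy1 := W_Vi W1 (fun v (h : v = a) => eq_ind_r (Vp E p) Na h) Vy1.
  have Wy2 := W_Vi W2 (fun v (h : v = b) => eq_ind_r (Vp E p) Nb h) Vy2.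
  have y12 : y1 <> y2 by move=> h; rewrite h in Wy1; exact: (W_two ab' Wy1 Wy2).
  have A1 := Vi_Ap Eps1 Vy1; have A2 := Vi_Ap Eps2 Vy2.
  split.
  + by exists y1, y2.
  + exact: (dir_forward y12 A1 A2 Eps1 ab' Na Nb bp W1).
  + exact: (dir_forward y12 A1 A2 Eps2 ba' Nb Na ap W2).
- move=> [[y1 [y2 [y12 [A1 A2]]]] [n1 [r1 [st1 cb1]]] [n2 [r2 [st2 cb2]]]].
  have [Na [Nb W1]] := dir_backward y12 A1 A2 Eps1 ab' ap st1 cb1.
  have [_ [_ W2]] := dir_backward y12 A1 A2 Eps2 ba' bp st2 cb2.
  refine (conj Na (conj Nb (conj _ _))).
  + exact: ((AMB_W E s1 ab).2 W1).
  + exact: ((AMB_W E s2 ba).2 W2).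
Qed.
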